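(* Let $\Lambda>1$ and let $(v_1,v_2)$ be a solution with positive components of \[ -v_1''+v_1^3-v_1+\Lambda v_2^2v_1=0,\qquad -v_2''+v_2^3-v_2+\Lambda v_1^2v_2=0,\qquad z\in\mathbb{R}, \] \[ (v_1,v_2)\to(0,1)\ \text{as } z\to-\infty,\qquad (v_1,v_2)\to(1,0)\ \text{as } z\to+\infty. \] Then $v_1'>0$ on $\mathbb{R}$ implies $v_2'<0$ on $\mathbb{R}$, and conversely $v_2'<0$ on $\mathbb{R}$ implies $v_1'>0$ on $\mathbb{R}$. *)

(* Defs.v *)
From Stdlib Require Import Reals.
From Coquelicot Require Import Coquelicot.
Open Scope R_scope.

Definition is_solution (Lam : R) (v1 v2 : R -> R) : Prop :=
  (forall z, ex_derive v1 z) /\ (forall z, ex_derive v2 z) /\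
  (forall z, ex_derive (Derive v1) z) /\ (forall z, ex_derive (Derive v2) z) /\
  (forall z, - Derive (Derive v1) z + v1 z ^ 3 - v1 z + Lam * v2 z ^ 2 * v1 z = 0) /\
  (forall z, - Derive (Derive v2) z + v2 z ^ 3 - v2 z + Lam * v1 z ^ 2 * v2 z = 0).

(* Main.v *)
Require Import Defs.
From Stdlib Require Import Reals Lra.
From Coquelicot Require Import Coquelicot.
Open Scope R_scope.

Lemma lim_p (f : R -> R) (l : R) : is_lim f p_infty l ->
  forall eps, 0 < eps -> exists M, forall x, M < x -> Rabs (f x - l) < eps.
Proof.
  intros H eps He. destruct (proj1 (filterlim_locally f l) H (mkposreal eps He)) as [M HM].
  exists M. intros x Hx. specialize (HM x Hx). exact HM.
Qed.

Lemma lim_m (f : R -> R) (l : R) : is_lim f m_infty l ->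
  forall eps, 0 < eps -> exists M, forall x, x < M -> Rabs (f x - l) < eps.
Proof.
  intros H eps He. destruct (proj1 (filterlim_locally f l) H (mkposreal eps He)) as [M HM].
  exists M. intros x Hx. specialize (HM x Hx). exact HM.
Qed.

Lemma cont_sign (h : R -> R) (p : R) : continuous h p -> h p <> 0 ->
  exists d, 0 < d /\ forall x, Rabs (x - p) < d -> 0 < h x * h p.
Proof.
  intros Hc Hn.
  assert (He : 0 < Rabs (h p)) by (apply Rabs_pos_lt; exact Hn).
  destruct (proj1 (filterlim_locally h (h p)) Hc (mkposreal _ He)) as [d Hd].
  exists d. split. apply cond_pos. intros x Hx.
  specialize (Hd x Hx). change (Rabs (h x - h p) < Rabs (h p)) in Hd.
  apply Rabs_def2 in Hd. destruct (Rle_lt_dec 0 (h p)).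
  - rewrite Rabs_right in Hd by lra. nra.
  - rewrite (Rabs_left (h p)) in Hd by lra. nra.
Qed.

Lemma mvt (f df : R -> R) a b : (forall x, is_derive f x (df x)) -> a < b ->
  exists c, a < c < b /\ f b - f a = df c * (b - a).
Proof.
  intros H Hab. destruct (MVT_cor2 f df a b Hab) as [c [Hc1 Hc2]].
  intros c _. apply is_derive_Reals, H.
  exists c; auto.
Qed.

Lemma loc_min (f : R -> R) c p d : (forall x, ex_derive f x) ->
  (forall x, ex_derive (Derive f) x) -> c < p < d ->
  (forall x, c < x < d -> Derive (Derive f) x < 0) ->
  exists x, c < x < d /\ f x < f p.
Proof.
  intros H1 H2 Hp H.
  assert (D1 : forall x, is_derive f x (Derive f x)) by (intro; apply Derive_correct, H1).
  assert (D2 : forall x, is_derive (Derive f) x (Derive (Derive f) x)) by (intro; apply Derive_correct, H2).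
  destruct (Rle_lt_dec (Derive f p) 0) as [Hd|Hd].
  - exists ((p+d)/2). split. lra.
    destruct (mvt f (Derive f) p ((p+d)/2) D1) as [c1 [Hc1 E1]]. lra.
    destruct (mvt (Derive f) (Derive (Derive f)) p c1 D2) as [c2 [Hc2 E2]]. lra.
    assert (Derive (Derive f) c2 < 0) by (apply H; lra).
    assert (Derive f c1 < 0) by nra. nra.
  - exists ((c+p)/2). split. lra.
    destruct (mvt f (Derive f) ((c+p)/2) p D1) as [c1 [Hc1 E1]]. lra.
    destruct (mvt (Derive f) (Derive (Derive f)) c1 p D2) as [c2 [Hc2 E2]]. lra.
    assert (Derive (Derive f) c2 < 0) by (apply H; lra).
    assert (0 < Derive f c1) by nra. nra.
Qed.

Lemma loc_max (f : R -> R) c p d : (forall x, ex_derive f x) ->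
  (forall x, ex_derive (Derive f) x) -> c < p < d ->
  (forall x, c < x < d -> 0 < Derive (Derive f) x) ->
  exists x, c < x < d /\ f p < f x.
Proof.
  intros H1 H2 Hp H.
  assert (D1 : forall x, is_derive f x (Derive f x)) by (intro; apply Derive_correct, H1).
  assert (D2 : forall x, is_derive (Derive f) x (Derive (Derive f) x)) by (intro; apply Derive_correct, H2).
  destruct (Rle_lt_dec 0 (Derive f p)) as [Hd|Hd].
  - exists ((p+d)/2). split. lra.
    destruct (mvt f (Derive f) p ((p+d)/2) D1) as [c1 [Hc1 E1]]. lra.
    destruct (mvt (Derive f) (Derive (Derive f)) p c1 D2) as [c2 [Hc2 E2]]. lra.
    assert (0 < Derive (Derive f) c2) by (apply H; lra).
    assert (0 < Derive f c1) by nra. nra.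
  - exists ((c+p)/2). split. lra.
    destruct (mvt f (Derive f) ((c+p)/2) p D1) as [c1 [Hc1 E1]]. lra.
    destruct (mvt (Derive f) (Derive (Derive f)) c1 p D2) as [c2 [Hc2 E2]]. lra.
    assert (0 < Derive (Derive f) c2) by (apply H; lra).
    assert (Derive f c1 < 0) by nra. nra.
Qed.

Lemma incr (f : R -> R) a b : (forall x, ex_derive f x) -> (forall x, 0 < Derive f x) ->
  a < b -> f a < f b.
Proof.
  intros H1 H a' . destruct (mvt f (Derive f) a b) as [c [_ E]]; auto.
  intro; apply Derive_correct, H1. specialize (H c). nra.
Qed.

Lemma decr (f : R -> R) a b : (forall x, ex_derive f x) -> (forall x, Derive f x < 0) ->
  a < b -> f b < f a.
Proof.
  intros H1 H a' . destruct (mvt f (Derive f) a b) as [c [_ E]]; auto.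
  intro; apply Derive_correct, H1. specialize (H c). nra.
Qed.

Lemma lmax_q (f q : R -> R) a p b : (forall x, ex_derive f x) ->
  (forall x, ex_derive (Derive f) x) -> (forall x, Derive (Derive f) x = f x * q x) ->
  (forall x, 0 < f x) -> continuous q p -> a < p < b ->
  (forall x, a < x < b -> f x <= f p) -> q p <= 0.
Proof.
  intros H1 H2 E Hf Hc Hp Hm.
  destruct (Rle_lt_dec (q p) 0) as [|Hq]; [assumption|exfalso].
  destruct (cont_sign q p Hc) as [d [Hd Hs]]. lra.
  set (e := Rmin d (Rmin (p-a) (b-p))).
  assert (e1 : e <= d) by apply Rmin_l.
  assert (e2 : e <= p - a) by (eapply Rle_trans; [apply Rmin_r|apply Rmin_l]).
  assert (e3 : e <= b - p) by (eapply Rle_trans; [apply Rmin_r|apply Rmin_r]).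
  assert (e0 : 0 < e) by (unfold e; repeat apply Rmin_glb_lt; lra).
  destruct (loc_max f (p - e) p (p + e) H1 H2) as [x [Hx Hfx]]. lra.
  intros x Hx. rewrite E. apply Rmult_lt_0_compat. apply Hf.
  assert (Hs' := Hs x ltac:(apply Rabs_def1; lra)). nra.
  assert (f x <= f p) by (apply Hm; lra). lra.
Qed.

Lemma lmin_q (f q : R -> R) a p b : (forall x, ex_derive f x) ->
  (forall x, ex_derive (Derive f) x) -> (forall x, Derive (Derive f) x = f x * q x) ->
  (forall x, 0 < f x) -> continuous q p -> a < p < b ->
  (forall x, a < x < b -> f p <= f x) -> 0 <= q p.
Proof.
  intros H1 H2 E Hf Hc Hp Hm.
  destruct (Rle_lt_dec 0 (q p)) as [|Hq]; [assumption|exfalso].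
  destruct (cont_sign q p Hc) as [d [Hd Hs]]. lra.
  set (e := Rmin d (Rmin (p-a) (b-p))).
  assert (e1 : e <= d) by apply Rmin_l.
  assert (e2 : e <= p - a) by (eapply Rle_trans; [apply Rmin_r|apply Rmin_l]).
  assert (e3 : e <= b - p) by (eapply Rle_trans; [apply Rmin_r|apply Rmin_r]).
  assert (e0 : 0 < e) by (unfold e; repeat apply Rmin_glb_lt; lra).
  destruct (loc_min f (p - e) p (p + e) H1 H2) as [x [Hx Hfx]]. lra.
  intros x Hx. rewrite E.
  assert (Hs' := Hs x ltac:(apply Rabs_def1; lra)). specialize (Hf x). nra.
  assert (f p <= f x) by (apply Hm; lra). lra.
Qed.

Lemma exd_cont (f : R -> R) x : ex_derive f x -> continuous f x.
Proof. intro H. apply (@ex_derive_continuous R_AbsRing R_NormedModule). exact H. Qed.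
Lemma dir1 (Lam : R) (v1 v2 : R -> R) :
  1 < Lam -> is_solution Lam v1 v2 ->
  (forall z, 0 < v1 z) -> (forall z, 0 < v2 z) ->
  is_lim v2 m_infty 1 -> is_lim v2 p_infty 0 ->
  (forall z, 0 < Derive v1 z) -> (forall z, Derive v2 z < 0).
Proof.
  intros HL [d1 [d2 [dd1 [dd2 [e1 e2]]]]] P1 P2 Lm Lp I1.
  set (q := fun z => v2 z ^ 2 - 1 + Lam * v1 z ^ 2).
  assert (E : forall x, Derive (Derive v2) x = v2 x * q x).
  { intro x; specialize (e2 x); unfold q; nra. }
  assert (Cq : forall x, continuous q x).
  { intro x; apply exd_cont; unfold q; auto_derive; repeat split; auto. }
  assert (Cv2 : forall x, continuity_pt v2 x).
  { intro x; apply continuity_pt_filterlim, exd_cont, d2. }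
  assert (Main : forall a b, a < b -> v2 a < v2 b -> False).
  { intros a b Hab Hv.
    destruct (lim_p v2 0 Lp (v2 b) (P2 b)) as [M0 HM0].
    set (M := Rmax M0 b + 1).
    assert (M0 < M) by (unfold M; generalize (Rmax_l M0 b); lra).
    assert (b < M) by (unfold M; generalize (Rmax_r M0 b); lra).
    assert (HM : v2 M < v2 b).
    { specialize (HM0 M ltac:(lra)). apply Rabs_def2 in HM0. lra. }
    destruct (continuity_ab_maj v2 a M) as [zb [Hzb Hzb2]]. lra.
    intros; apply Cv2.
    assert (v2 b <= v2 zb) by (apply Hzb; lra).
    assert (zb <> a) by (intro; subst; lra).
    assert (zb <> M) by (intro; subst; lra).
    assert (Qb : q zb <= 0).
    { apply (lmax_q v2 q a zb M); auto. lra. intros; apply Hzb; lra. }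
    assert (v2 zb < 1).
    { unfold q in Qb. specialize (P1 zb). specialize (P2 zb). nra. }
    destruct (lim_m v2 1 Lm (1 - v2 zb) ltac:(lra)) as [N0 HN0].
    set (N := Rmin N0 a - 1).
    assert (N < N0) by (unfold N; generalize (Rmin_l N0 a); lra).
    assert (N < a) by (unfold N; generalize (Rmin_r N0 a); lra).
    assert (HN : v2 zb < v2 N).
    { specialize (HN0 N ltac:(lra)). apply Rabs_def2 in HN0. lra. }
    destruct (continuity_ab_min v2 N zb) as [za [Hza Hza2]]. lra.
    intros; apply Cv2.
    assert (v2 za <= v2 a) by (apply Hza; lra).
    assert (za <> N) by (intro; subst; lra).
    assert (za <> zb) by (intro; subst; lra).
    assert (Qa : 0 <= q za).
    { apply (lmin_q v2 q N za zb); auto. lra. intros; apply Hza; lra. }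
    assert (v1 za < v1 zb) by (apply (incr v1); auto; lra).
    unfold q in Qa, Qb.
    assert (v2 za ^ 2 < v2 zb ^ 2) by (generalize (P2 za); nra).
    assert (v1 za ^ 2 < v1 zb ^ 2) by (generalize (P1 za); nra).
    nra. }
  assert (C : forall z1, 0 < Derive v2 z1 -> False).
  { intros z1 Hz1.
    destruct (cont_sign (Derive v2) z1 (exd_cont _ _ (dd2 z1))) as [d [Hd Hs]]. lra.
    destruct (mvt v2 (Derive v2) z1 (z1 + d/2)) as [c [Hc Ec]].
    intro; apply Derive_correct, d2. lra.
    assert (Hs' := Hs c ltac:(apply Rabs_def1; lra)).
    assert (0 < Derive v2 c) by nra.
    apply (Main z1 (z1 + d/2)); nra. }
  intro z. destruct (Rtotal_order (Derive v2 z) 0) as [|[H0|H0]]; [assumption| |exfalso; exact (C z H0)].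
  exfalso.
  set (dq := fun x => 2 * v2 x * Derive v2 x + 2 * Lam * v1 x * Derive v1 x).
  assert (Dq : forall x, is_derive q x (dq x)).
  { intro x. unfold q, dq. auto_derive. repeat split; auto. change (fun x : R => v2 x) with v2. change (fun x : R => v1 x) with v1. ring. }
  assert (Cdq : continuous dq z).
  { apply exd_cont; unfold dq; auto_derive; repeat split; auto. }
  assert (dqz : 0 < dq z).
  { unfold dq; rewrite H0. assert (0 < v1 z * Derive v1 z) by (apply Rmult_lt_0_compat; auto). nra. }
  destruct (cont_sign dq z Cdq) as [d [Hd Hs]]. lra.
  assert (D2 : forall x, is_derive (Derive v2) x (Derive (Derive v2) x)) by (intro; apply Derive_correct, dd2).
  destruct (Rle_lt_dec 0 (q z)) as [Hq|Hq].
  - destruct (mvt (Derive v2) (Derive (Derive v2)) z (z + d/2) D2) as [c [Hc Ec]]. lra.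
    destruct (mvt q dq z c Dq) as [c2 [Hc2 Ec2]]. lra.
    assert (Hs' := Hs c2 ltac:(apply Rabs_def1; lra)).
    assert (0 < dq c2) by nra.
    assert (0 < q c) by nra.
    rewrite E in Ec. generalize (P2 c). intro.
    assert (0 < v2 c * q c) by (apply Rmult_lt_0_compat; auto).
    apply (C (z + d/2)). nra.
  - destruct (mvt (Derive v2) (Derive (Derive v2)) (z - d/2) z D2) as [c [Hc Ec]]. lra.
    destruct (mvt q dq c z Dq) as [c2 [Hc2 Ec2]]. lra.
    assert (Hs' := Hs c2 ltac:(apply Rabs_def1; lra)).
    assert (0 < dq c2) by nra.
    assert (q c < 0) by nra.
    rewrite E in Ec. generalize (P2 c). intro.
    assert (v2 c * q c < 0) by nra.
    apply (C (z - d/2)). nra.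
Qed.
Lemma dir2 (Lam : R) (v1 v2 : R -> R) :
  1 < Lam -> is_solution Lam v1 v2 ->
  (forall z, 0 < v1 z) -> (forall z, 0 < v2 z) ->
  is_lim v1 m_infty 0 -> is_lim v1 p_infty 1 ->
  (forall z, Derive v2 z < 0) -> (forall z, 0 < Derive v1 z).
Proof.
  intros HL [d1 [d2 [dd1 [dd2 [e1 e2]]]]] P1 P2 Lm Lp I2.
  set (q := fun z => v1 z ^ 2 - 1 + Lam * v2 z ^ 2).
  assert (E : forall x, Derive (Derive v1) x = v1 x * q x).
  { intro x; specialize (e1 x); unfold q; nra. }
  assert (Cq : forall x, continuous q x).
  { intro x; apply exd_cont; unfold q; auto_derive; repeat split; auto. }
  assert (Cv1 : forall x, continuity_pt v1 x).
  { intro x; apply continuity_pt_filterlim, exd_cont, d1. }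
  assert (Main : forall a b, a < b -> v1 b < v1 a -> False).
  { intros a b Hab Hv.
    destruct (lim_m v1 0 Lm (v1 b) (P1 b)) as [N0 HN0].
    set (N := Rmin N0 a - 1).
    assert (N < N0) by (unfold N; generalize (Rmin_l N0 a); lra).
    assert (N < a) by (unfold N; generalize (Rmin_r N0 a); lra).
    assert (HN : v1 N < v1 b).
    { specialize (HN0 N ltac:(lra)). apply Rabs_def2 in HN0. lra. }
    destruct (continuity_ab_maj v1 N b) as [zb [Hzb Hzb2]]. lra.
    intros; apply Cv1.
    assert (v1 a <= v1 zb) by (apply Hzb; lra).
    assert (zb <> b) by (intro; subst; lra).
    assert (zb <> N) by (intro; subst; lra).
    assert (Qb : q zb <= 0).
    { apply (lmax_q v1 q N zb b); auto. lra. intros; apply Hzb; lra. }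
    assert (v1 zb < 1).
    { unfold q in Qb. specialize (P1 zb). specialize (P2 zb). nra. }
    destruct (lim_p v1 1 Lp (1 - v1 zb) ltac:(lra)) as [M0 HM0].
    set (M := Rmax M0 b + 1).
    assert (M0 < M) by (unfold M; generalize (Rmax_l M0 b); lra).
    assert (b < M) by (unfold M; generalize (Rmax_r M0 b); lra).
    assert (HM : v1 zb < v1 M).
    { specialize (HM0 M ltac:(lra)). apply Rabs_def2 in HM0. lra. }
    destruct (continuity_ab_min v1 zb M) as [za [Hza Hza2]]. lra.
    intros; apply Cv1.
    assert (v1 za <= v1 b) by (apply Hza; lra).
    assert (za <> M) by (intro; subst; lra).
    assert (za <> zb) by (intro; subst; lra).
    assert (Qa : 0 <= q za).
    { apply (lmin_q v1 q zb za M); auto. lra. intros; apply Hza; lra. }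
    assert (v2 za < v2 zb) by (apply (decr v2); auto; lra).
    unfold q in Qa, Qb.
    assert (v1 za ^ 2 < v1 zb ^ 2) by (generalize (P1 za); nra).
    assert (v2 za ^ 2 < v2 zb ^ 2) by (generalize (P2 za); nra).
    nra. }
  assert (C : forall z1, Derive v1 z1 < 0 -> False).
  { intros z1 Hz1.
    destruct (cont_sign (Derive v1) z1 (exd_cont _ _ (dd1 z1))) as [d [Hd Hs]]. lra.
    destruct (mvt v1 (Derive v1) z1 (z1 + d/2)) as [c [Hc Ec]].
    intro; apply Derive_correct, d1. lra.
    assert (Hs' := Hs c ltac:(apply Rabs_def1; lra)).
    assert (Derive v1 c < 0) by nra.
    apply (Main z1 (z1 + d/2)); nra. }
  intro z. destruct (Rtotal_order (Derive v1 z) 0) as [H0|[H0|H0]]; [exfalso; exact (C z H0)| |assumption].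
  exfalso.
  set (dq := fun x => 2 * v1 x * Derive v1 x + 2 * Lam * v2 x * Derive v2 x).
  assert (Dq : forall x, is_derive q x (dq x)).
  { intro x. unfold q, dq. auto_derive. repeat split; auto. change (fun x : R => v2 x) with v2. change (fun x : R => v1 x) with v1. ring. }
  assert (Cdq : continuous dq z).
  { apply exd_cont; unfold dq; auto_derive; repeat split; auto. }
  assert (dqz : dq z < 0).
  { unfold dq; rewrite H0. assert (v2 z * Derive v2 z < 0) by (generalize (P2 z) (I2 z); nra). nra. }
  destruct (cont_sign dq z Cdq) as [d [Hd Hs]]. lra.
  assert (D2 : forall x, is_derive (Derive v1) x (Derive (Derive v1) x)) by (intro; apply Derive_correct, dd1).
  destruct (Rle_lt_dec (q z) 0) as [Hq|Hq].
  - destruct (mvt (Derive v1) (Derive (Derive v1)) z (z + d/2) D2) as [c [Hc Ec]]. lra.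
    destruct (mvt q dq z c Dq) as [c2 [Hc2 Ec2]]. lra.
    assert (Hs' := Hs c2 ltac:(apply Rabs_def1; lra)).
    assert (dq c2 < 0) by nra.
    assert (q c < 0) by nra.
    rewrite E in Ec. generalize (P1 c). intro.
    assert (v1 c * q c < 0) by nra.
    apply (C (z + d/2)). nra.
  - destruct (mvt (Derive v1) (Derive (Derive v1)) (z - d/2) z D2) as [c [Hc Ec]]. lra.
    destruct (mvt q dq c z Dq) as [c2 [Hc2 Ec2]]. lra.
    assert (Hs' := Hs c2 ltac:(apply Rabs_def1; lra)).
    assert (dq c2 < 0) by nra.
    assert (0 < q c) by nra.
    rewrite E in Ec. generalize (P1 c). intro.
    assert (0 < v1 c * q c) by (apply Rmult_lt_0_compat; auto).
    apply (C (z - d/2)). nra.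
Qed.

Theorem lemma7p1 (Lam : R) (v1 v2 : R -> R) :
  1 < Lam ->
  is_solution Lam v1 v2 ->
  (forall z, 0 < v1 z) -> (forall z, 0 < v2 z) ->
  is_lim v1 m_infty 0 -> is_lim v2 m_infty 1 ->
  is_lim v1 p_infty 1 -> is_lim v2 p_infty 0 ->
  ((forall z, 0 < Derive v1 z) -> (forall z, Derive v2 z < 0)) /\
  ((forall z, Derive v2 z < 0) -> (forall z, 0 < Derive v1 z)).
Proof.
  intros. split.
  - apply (dir1 Lam v1 v2); auto.
  - apply (dir2 Lam v1 v2); auto.
Qed.
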